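(* Let $H\in\mathbb{R}^{n\times d}$ have rank $h$, $\Sigma\in\mathbb{R}^{n\times n}$ symmetric positive definite, and let $\Gamma_i$ ($i\ge0$) be the empirical covariances of deterministic EKI iterates $v_{i+1}^{(j)}=v_i^{(j)}+\Gamma_iH^\top(H\Gamma_iH^\top+\Sigma)^{-1}(y-Hv_i^{(j)})$. Let $\mathbb{M}_i=(I+\Gamma_iH^\top\Sigma^{-1}H)^{-1}$ and let $\mathbb{P},\mathbb{Q},\mathbb{N}$ be as in the context. Then for every $i\ge0$: $\mathbb{M}_i$ commutes with each of $\mathbb{P},\mathbb{Q},\mathbb{N}$; $\mathbb{P}^2=\mathbb{P}$, $\mathbb{Q}^2=\mathbb{Q}$, $\mathbb{N}^2=\mathbb{N}$; $\mathbb{P}\mathbb{Q}=\mathbb{Q}\mathbb{N}=\mathbb{P}\mathbb{N}=0$; and $\mathbb{P}+\mathbb{Q}+\mathbb{N}=I$.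
   Context: $H^+=(H^\top\Sigma^{-1}H)^\dagger H^\top\Sigma^{-1}$. Let $r$ be the number of positive eigenvalues of $H\Gamma_0H^\top w=\delta\Sigma w$, and $w_1,\dots,w_n$ a basis of $\mathbb{R}^n$ with $w_k^\top\Sigma w_l$ equal to $1$ if $k=l$, $0$ otherwise, each $w_\ell$ a generalized eigenvector of $(H\Gamma_iH^\top,\Sigma)$ for every $i\ge0$ with eigenvalue $\delta_{\ell,i}$, where $w_1,\dots,w_r\in\mathsf{Ran}(\Sigma^{-1}H)$ have positive eigenvalues, $w_{r+1},\dots,w_h\in\mathsf{Ran}(\Sigma^{-1}H)$ eigenvalue zero, $w_{h+1},\dots,w_n$ a basis of $\mathsf{Ker}(H^\top)$. Let $u_\ell=\frac1{\delta_{\ell,0}}\Gamma_0H^\top w_\ell$ ($\ell\le r$), $u_\ell=H^+\Sigma w_\ell$ ($r<\ell\le h$), $U=[u_1,\dots,u_h]$, $U_{k:l}$ its columns $k$ through $l$. $\mathbb{P}=U_{1:r}U_{1:r}^\top H^\top\Sigma^{-1}H$, $\mathbb{Q}=U_{r+1:h}U_{r+1:h}^\top H^\top\Sigma^{-1}H$, $\mathbb{N}=I-\mathbb{P}-\mathbb{Q}$. *)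

(* Defs.v *)
From HB Require Import structures.
From mathcomp Require Import all_boot all_order all_algebra.
Set Implicit Arguments. Unset Strict Implicit. Unset Printing Implicit Defensive.
Import Order.TTheory GRing.Theory Num.Theory.
Local Open Scope ring_scope.

Section EKI.
Variable R : realFieldType.

(* Ensemble of J particles in R^d stored as the columns of a d x J matrix. *)
Definition ens_mean_mx d J (V : 'M[R]_(d, J)) : 'M[R]_(d, J) :=
  V *m (J%:R^-1 *: const_mx 1).

Definition emp_cov d J (V : 'M[R]_(d, J)) : 'M[R]_d :=
  let C := V - ens_mean_mx V in J%:R^-1 *: (C *m C^T).

Definition eki_step n d J (H : 'M[R]_(n, d)) (Sigma : 'M[R]_n)
    (y : 'cV[R]_n) (V : 'M[R]_(d, J)) : 'M[R]_(d, J) :=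
  let G := emp_cov V in
  V + G *m H^T *m invmx (H *m G *m H^T + Sigma)
        *m (y *m const_mx 1 - H *m V).

Definition eki_iter n d J (H : 'M[R]_(n, d)) (Sigma : 'M[R]_n)
    (y : 'cV[R]_n) (V0 : 'M[R]_(d, J)) (i : nat) : 'M[R]_(d, J) :=
  iter i (eki_step H Sigma y) V0.

Definition eki_cov n d J (H : 'M[R]_(n, d)) (Sigma : 'M[R]_n)
    (y : 'cV[R]_n) (V0 : 'M[R]_(d, J)) (i : nat) : 'M[R]_d :=
  emp_cov (eki_iter H Sigma y V0 i).

Definition eki_M n d J (H : 'M[R]_(n, d)) (Sigma : 'M[R]_n)
    (y : 'cV[R]_n) (V0 : 'M[R]_(d, J)) (i : nat) : 'M[R]_d :=
  invmx (1%:M + eki_cov H Sigma y V0 i *m H^T *m invmx Sigma *m H).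

Definition sym_posdef n (S : 'M[R]_n) : Prop :=
  S^T = S /\ forall x : 'cV[R]_n, x != 0 -> 0 < (x^T *m S *m x) 0 0.

Definition is_MP_pinv m k (A : 'M[R]_(m, k)) (X : 'M[R]_(k, m)) : Prop :=
  [/\ A *m X *m A = A, X *m A *m X = X,
      (A *m X)^T = A *m X & (X *m A)^T = X *m A].

(* u_l: for l < r, (1/delta_{l,0}) Gamma_0 H^T w_l;
        otherwise  H^+ Sigma w_l  with H^+ = Adag H^T Sigma^{-1},
        Adag the MP pseudo-inverse of H^T Sigma^{-1} H
   (only used for l < h). Indices are 0-based. *)
Definition eki_u n d (H : 'M[R]_(n, d)) (Sigma : 'M[R]_n) (G0 : 'M[R]_d)
    (Adag : 'M[R]_d) (W : 'M[R]_n) (delta0 : 'I_n -> R) (r : nat)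
    (l : 'I_n) : 'cV[R]_d :=
  if (l < r)%N then (delta0 l)^-1 *: (G0 *m H^T *m col l W)
  else Adag *m H^T *m invmx Sigma *m Sigma *m col l W.

(* U_{a:b} U_{a:b}^T H^T Sigma^{-1} H, with U_{a:b}U_{a:b}^T written as the
   sum of outer products u_l u_l^T over a <= l < b (0-based). *)
Definition eki_proj n d (H : 'M[R]_(n, d)) (Sigma : 'M[R]_n) (G0 : 'M[R]_d)
    (Adag : 'M[R]_d) (W : 'M[R]_n) (delta0 : 'I_n -> R) (r a b : nat)
    : 'M[R]_d :=
  (\sum_(l < n | (a <= l < b)%N)
      eki_u H Sigma G0 Adag W delta0 r l *m (eki_u H Sigma G0 Adag W delta0 r l)^T)
  *m H^T *m invmx Sigma *m H.

End EKI.

(* Main.v *)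
Require Import Defs.
From HB Require Import structures.
From mathcomp Require Import all_boot all_order all_algebra.
From mathcomp Require Import lra.
Import Order.TTheory GRing.Theory Num.Theory.
Local Open Scope ring_scope.

Lemma projs_mul (R : realFieldType) (n d : nat) (A : 'M[R]_d)
  (u : 'I_n -> 'cV[R]_d) (p q : pred 'I_n) :
  (forall k l, p k -> q l -> (u k)^T *m A *m u l = (k == l)%:R%:M) ->
  (\sum_(k | p k) u k *m (u k)^T) *m A *m ((\sum_(l | q l) u l *m (u l)^T) *m A)
  = (\sum_(k | p k && q k) u k *m (u k)^T) *m A.
Proof.
move=> hu; rewrite mulmxA; congr (_ *m A).
rewrite mulmx_suml mulmx_suml big_mkcondr /=; apply: eq_bigr => k pk.
rewrite mulmx_sumr.
rewrite (eq_bigr (fun l => (k == l)%:R *: (u k *m (u l)^T))); last first.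
  move=> l ql; rewrite !mulmxA -(mulmxA (u k)) -(mulmxA (u k)) hu //.
  by rewrite mul_mx_scalar scalemxAl.
case: (boolP (q k)) => qk.
  rewrite (bigD1 k) //= eqxx scale1r big1 ?addr0 // => l /andP[_ hl].
  by rewrite eq_sym (negbTE hl) scale0r.
apply: big1 => l ql; have : k != l by apply: contraNneq qk => ->.
by move/negbTE => ->; rewrite scale0r.
Qed.

Lemma proj_comm (R : realFieldType) (n d : nat) (A G : 'M[R]_d)
  (u : 'I_n -> 'cV[R]_d) (p : pred 'I_n) :
  A^T = A -> G^T = G ->
  (forall l, p l -> exists c, G *m A *m u l = c *: u l) ->
  G *m A *m ((\sum_(l | p l) u l *m (u l)^T) *m A)
  = (\sum_(l | p l) u l *m (u l)^T) *m A *m (G *m A).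
Proof.
move=> sA sG hu; rewrite !mulmxA; congr (_ *m A).
rewrite mulmx_sumr -[RHS]mulmxA mulmx_suml; apply: eq_bigr => l pl.
have [c hc] := hu l pl.
rewrite mulmxA hc -scalemxAl -mulmxA.
have -> : (u l)^T *m (A *m G) = c *: (u l)^T.
  apply: trmx_inj; rewrite !trmx_mul trmxK sA sG linearZ /= trmxK.
  exact: hc.
by rewrite scalemxAr.
Qed.

Lemma invmx_comm (R : realFieldType) (d : nat) (X P : 'M[R]_d) :
  X *m P = P *m X -> invmx X *m P = P *m invmx X.
Proof.
move=> hX; case: (boolP (X \in unitmx)) => uX; last first.
  by rewrite invmx_out ?inE.
rewrite -[P in LHS]mulmx1 -(mulmxV uX) !mulmxA -(mulmxA _ P X) -hX.
by rewrite mulmxA mulVmx // mul1mx.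
Qed.
Lemma emp_cov_sym (R : realFieldType) d J (V : 'M[R]_(d, J)) :
  (emp_cov V)^T = emp_cov V.
Proof. by rewrite /emp_cov /= linearZ /= trmx_mul trmxK. Qed.

Lemma emp_cov_quad (R : realFieldType) d J (V : 'M[R]_(d, J)) (x : 'cV[R]_d) :
  let C := V - ens_mean_mx V in
  (x^T *m emp_cov V *m x) 0 0 = J%:R^-1 * \sum_j ((C^T *m x) j 0) ^+ 2.
Proof.
move=> C; rewrite /emp_cov /= -/C -scalemxAr -scalemxAl mxE.
congr (_ * _).
rewrite mulmxA -(mulmxA _ C^T) -{1}[C](trmxK) -trmx_mul mxE.
by apply: eq_bigr => j _; rewrite mxE expr2.
Qed.

Lemma emp_cov_psd (R : realFieldType) d J (V : 'M[R]_(d, J)) (x : 'cV[R]_d) :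
  0 <= (x^T *m emp_cov V *m x) 0 0.
Proof.
rewrite emp_cov_quad; apply: mulr_ge0; first by rewrite invr_ge0 ler0n.
by apply: sumr_ge0 => j _; rewrite sqr_ge0.
Qed.

Lemma emp_cov_zero (R : realFieldType) d J (V : 'M[R]_(d, J)) (x : 'cV[R]_d) :
  (x^T *m emp_cov V *m x) 0 0 = 0 -> emp_cov V *m x = 0.
Proof.
rewrite emp_cov_quad; set C := V - _ => h.
have [J0|J0] := eqVneq J 0%N.
  have hJ : (J%:R^-1 : R) = 0 by rewrite J0 invr0.
  by rewrite /emp_cov /= hJ scale0r mul0mx.
move: h => /eqP; rewrite mulf_eq0 invr_eq0 pnatr_eq0 (negbTE J0) /= => /eqP h.
have hC : C^T *m x = 0.
  apply/matrixP => j k; rewrite [k]ord1 [RHS]mxE.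
  have := @psumr_eq0P _ _ xpredT (fun j => (C^T *m x) j 0 ^+ 2) (fun j _ => sqr_ge0 ((C^T *m x) j 0)) h j isT.
  by move=> /eqP; rewrite sqrf_eq0 => /eqP.
by rewrite /emp_cov /= -/C -scalemxAl -mulmxA hC mulmx0 scaler0.
Qed.

Lemma posdef_unit (R : realFieldType) n (S : 'M[R]_n) :
  (forall x : 'cV[R]_n, x != 0 -> 0 < (x^T *m S *m x) 0 0) -> S \in unitmx.
Proof.
move=> hS; rewrite -row_free_unit -kermx_eq0; apply/negPn/negP => hK.
have [i hi] : exists i, row i (kermx S) != 0.
  apply/existsP; move: hK; apply: contraR; rewrite negb_exists => /forallP h.
  apply/eqP/row_matrixP => i; rewrite row0; exact/eqP/negPn/h.
have := hS (row i (kermx S))^T; rewrite trmxK -row_mul mulmx_ker row0 mul0mx mxE ltxx.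
by rewrite -(trmx0) (inj_eq trmx_inj) hi => /(_ isT).
Qed.
Lemma ones_mean (R : realFieldType) J :
  (const_mx 1 : 'M[R]_(1, J)) *m (J%:R^-1 *: (const_mx 1 : 'M[R]_J)) = const_mx 1.
Proof.
apply/matrixP => i j; case: J j => [[]//|J j].
rewrite !mxE (eq_bigr (fun _ => J.+1%:R^-1)) => [|k _]; last by rewrite !mxE mul1r mulr1.
by rewrite sumr_const card_ord -[(_^-1) *+ _]mulr_natl mulfV // pnatr_eq0.
Qed.

Lemma emp_cov_step (R : realFieldType) n d J (H : 'M[R]_(n, d)) Sigma y
  (V : 'M[R]_(d, J)) :
  let G := emp_cov V in
  let B := 1%:M - G *m H^T *m invmx (H *m G *m H^T + Sigma) *m H in
  emp_cov (eki_step H Sigma y V) = B *m G *m B^T.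
Proof.
move=> G B; set E := (J%:R^-1 *: const_mx 1 : 'M[R]_J).
set K := G *m H^T *m invmx (H *m G *m H^T + Sigma).
have hC : forall X : 'M[R]_(d, J), X - ens_mean_mx X = X *m (1%:M - E).
  by move=> X; rewrite mulmxBr mulmx1.
have key : eki_step H Sigma y V - ens_mean_mx (eki_step H Sigma y V)
    = B *m (V - ens_mean_mx V).
  have hy : y *m const_mx 1 *m (1%:M - E) = 0.
    by rewrite -mulmxA mulmxBr mulmx1 ones_mean subrr mulmx0.
  rewrite !hC /eki_step /= -/G -/K mulmxDl -mulmxA mulmxBl hy sub0r mulmxN.
  by rewrite /B mulmxBl mul1mx /K -!mulmxA.
rewrite /emp_cov /= key -/G /G /emp_cov /=.
by rewrite trmx_mul -scalemxAr -scalemxAl !mulmxA.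
Qed.

Lemma wsw (R : realFieldType) n (Sigma W : 'M[R]_n) k l :
  W^T *m Sigma *m W = 1%:M ->
  (col k W)^T *m Sigma *m col l W = (k == l)%:R%:M.
Proof.
move=> hW; rewrite tr_col rowE colE !mulmxA.
rewrite -(mulmxA _ W^T) -(mulmxA _ (W^T *m Sigma)) hW mulmx1 mul_delta_mx_cond.
apply/matrixP => i j; rewrite [i]ord1 [j]ord1 !mxE /=.
by case: (k == l); rewrite /= ?mulr1n ?mulr0n !mxE.
Qed.

Lemma cov_invariant (R : realFieldType) n d J (H : 'M[R]_(n, d)) Sigma y
  (V0 : 'M[R]_(d, J)) (W : 'M[R]_n) (delta : nat -> 'I_n -> R) :
  sym_posdef Sigma -> W^T *m Sigma *m W = 1%:M ->
  (forall (i : nat) (l : 'I_n),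
     H *m eki_cov H Sigma y V0 i *m H^T *m col l W
       = delta i l *: (Sigma *m col l W)) ->
  forall i l, exists c,
    eki_cov H Sigma y V0 i *m (H^T *m col l W)
      = c *: (eki_cov H Sigma y V0 0 *m (H^T *m col l W)).
Proof.
move=> [sS pS] hW hd i l; elim: i => [|i [c IH]]; first by exists 1; rewrite scale1r.
set w := col l W in IH *; set g := H^T *m w in IH *.
have -> : eki_cov H Sigma y V0 i.+1 = emp_cov (eki_step H Sigma y (eki_iter H Sigma y V0 i)).
  by rewrite /eki_cov /eki_iter iterS.
rewrite emp_cov_step.
have -> : emp_cov (eki_iter H Sigma y V0 i) = eki_cov H Sigma y V0 i by [].
set G := eki_cov H Sigma y V0 i in IH *.
set dl := delta i l.
have sG : G^T = G by exact: emp_cov_sym.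
have hw : H *m (G *m (H^T *m w)) = dl *: (Sigma *m w) by rewrite !mulmxA hd.
have dge0 : 0 <= dl.
  have := @emp_cov_psd _ _ _ (eki_iter H Sigma y V0 i) g; rewrite -/G.
  have -> : g^T *m G *m g = w^T *m (H *m (G *m (H^T *m w))).
    by rewrite /g trmx_mul trmxK ?mulmxA.
  by rewrite hw -scalemxAr mulmxA wsw // eqxx mxE mxE eqxx /= mulr1n mulr1.
set S := H *m G *m H^T + Sigma.
have uS : S \in unitmx.
  apply: posdef_unit => x x0; rewrite /S mulmxDr mulmxDl mxE.
  have -> : x^T *m (H *m G *m H^T) *m x = (H^T *m x)^T *m G *m (H^T *m x).
    by rewrite trmx_mul trmxK !mulmxA.
  have := @emp_cov_psd _ _ _ (eki_iter H Sigma y V0 i) (H^T *m x); rewrite -/G.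
  have := pS x x0; lra.
have sSS : S^T = S.
  by rewrite /S linearD /= !trmx_mul trmxK sG sS mulmxA.
have d1 : 1 + dl != 0 by apply: lt0r_neq0; lra.
have hSw : invmx S *m (Sigma *m w) = (1 + dl)^-1 *: w.
  have e : S *m w = (1 + dl) *: (Sigma *m w).
    by rewrite /S mulmxDl -!mulmxA hw scalerDl scale1r addrC.
  rewrite -[w in RHS]mul1mx -(mulVmx uS) -mulmxA e -scalemxAr scalerA mulVf //.
  by rewrite scale1r.
set B := 1%:M - G *m H^T *m invmx S *m H.
have hBt : B^T *m g = (1 - dl * (1+dl)^-1) *: g.
  rewrite /B linearB /= trmx1 mulmxBl mul1mx !trmx_mul !trmxK sG trmx_inv sSS -!mulmxA /g hw.
  by rewrite -!scalemxAr hSw -!scalemxAr scalerA scalerBl scale1r.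
have hBG : B *m (G *m g) = (1 - dl * (1+dl)^-1) *: (G *m g).
  rewrite /B mulmxBl mul1mx -!mulmxA /g hw.
  by rewrite -!scalemxAr hSw -!scalemxAr scalerA scalerBl scale1r.
rewrite -!mulmxA hBt -scalemxAr -scalemxAr hBG IH !scalerA.
by eexists.
Qed.

Lemma N_alg (R : realFieldType) d (P Q M : 'M[R]_d) :
  P *m P = P -> Q *m Q = Q -> P *m Q = 0 -> Q *m P = 0 ->
  M *m P = P *m M -> M *m Q = Q *m M ->
  [/\ M *m (1%:M - P - Q) = (1%:M - P - Q) *m M,
      (1%:M - P - Q) *m (1%:M - P - Q) = 1%:M - P - Q,
      Q *m (1%:M - P - Q) = 0, P *m (1%:M - P - Q) = 0
    & P + Q + (1%:M - P - Q) = 1%:M].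
Proof.
move=> hPP hQQ hPQ hQP hMP hMQ.
have hPN : P *m (1%:M - P - Q) = 0 by rewrite !mulmxBr mulmx1 hPP hPQ subrr subr0.
have hQN : Q *m (1%:M - P - Q) = 0 by rewrite !mulmxBr mulmx1 hQP hQQ subr0 subrr.
split => //.
- by rewrite !mulmxBr !mulmxBl mulmx1 mul1mx hMP hMQ.
- by rewrite [in LHS](mulmxBl (1%:M - P)) mulmxBl hPN hQN mul1mx !subr0.
- by rewrite addrC [P + Q]addrC addrA subrK subrK.
Qed.

Theorem proposition3p15 (R : realFieldType) (n d h r J : nat)
  (H : 'M[R]_(n, d)) (Sigma : 'M[R]_n) (y : 'cV[R]_n) (V0 : 'M[R]_(d, J))
  (W : 'M[R]_n) (delta : nat -> 'I_n -> R) (Adag : 'M[R]_d) :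
  \rank H = h ->
  sym_posdef Sigma ->
  W^T *m Sigma *m W = 1%:M ->
  (forall (i : nat) (l : 'I_n),
     H *m eki_cov H Sigma y V0 i *m H^T *m col l W
       = delta i l *: (Sigma *m col l W)) ->
  (r <= h)%N ->
  (forall l : 'I_n, (l < h)%N ->
     exists x : 'cV[R]_d, col l W = invmx Sigma *m H *m x) ->
  (forall l : 'I_n, (l < r)%N -> 0 < delta 0%N l) ->
  (forall l : 'I_n, (r <= l < h)%N -> delta 0%N l = 0) ->
  (forall l : 'I_n, (h <= l)%N -> H^T *m col l W = 0) ->
  is_MP_pinv (H^T *m invmx Sigma *m H) Adag ->
  let P := eki_proj H Sigma (eki_cov H Sigma y V0 0) Adag W (delta 0%N) r 0 r in
  let Q := eki_proj H Sigma (eki_cov H Sigma y V0 0) Adag W (delta 0%N) r r h in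
  let N := 1%:M - P - Q in
  forall i : nat,
    let M := eki_M H Sigma y V0 i in
    [/\ [/\ M *m P = P *m M, M *m Q = Q *m M & M *m N = N *m M],
        [/\ P *m P = P, Q *m Q = Q & N *m N = N],
        [/\ P *m Q = 0, Q *m N = 0 & P *m N = 0]
      & P + Q + N = 1%:M].
Proof.
move=> _ hS hW hd hrh hx hpos hzero _ hMP P Q N i M.
have [sS pS] := hS.
have uS : Sigma \in unitmx by exact: posdef_unit.
set Si := invmx Sigma.
set A := H^T *m Si *m H.
set G0 := eki_cov H Sigma y V0 0.
set u := eki_u H Sigma G0 Adag W (delta 0%N) r.
have [hAA _ _ _] := hMP; rewrite -/Si -/A in hAA.
have sSi : Si^T = Si by rewrite /Si trmx_inv sS.
have sA : A^T = A by rewrite /A !trmx_mul trmxK sSi mulmxA.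
have hSiS : Si *m Sigma = 1%:M by exact: mulVmx.
have hSSi : Sigma *m Si = 1%:M by exact: mulmxV.
have hAu : forall l : 'I_n, (l < h)%N -> A *m u l = H^T *m col l W.
  move=> l lh; rewrite /u /eki_u; case: ifP => lr.
    have dn0 : delta 0%N l != 0 by apply: lt0r_neq0; exact: hpos.
    have e : H *m (G0 *m (H^T *m col l W)) = delta 0%N l *: (Sigma *m col l W).
      by rewrite !mulmxA hd.
    rewrite -scalemxAr /A -!mulmxA e -!scalemxAr (mulmxA Si) hSiS mul1mx scalerA.
    by rewrite mulVf // scale1r.
  have [x hxl] := hx l lh.
  have hg : H^T *m col l W = A *m x by rewrite hxl /A !mulmxA.
  rewrite -(mulmxA _ Si Sigma) hSiS mulmx1 -(mulmxA Adag) hg.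
  transitivity (A *m Adag *m A *m x); first by rewrite !mulmxA.
  by rewrite hAA.
have hortho : forall k l : 'I_n, (k < h)%N -> (l < h)%N ->
    (u k)^T *m A *m u l = (k == l)%:R%:M.
  move=> k l kh lh.
  have [xk hxk] := hx k kh.
  have e1 : (u k)^T *m A = (col k W)^T *m H.
    by rewrite -[A in LHS]sA -trmx_mul hAu // trmx_mul trmxK.
  have e2 : (col k W)^T *m H = xk^T *m A.
    by rewrite hxk !trmx_mul -/Si sSi /A !mulmxA.
  have e3 : Sigma *m col k W = H *m xk.
    by rewrite hxk -/Si !mulmxA hSSi mul1mx.
  rewrite e1 e2 -mulmxA hAu // mulmxA -trmx_mul -e3 trmx_mul sS.
  exact: wsw.
have hGAu : forall l : 'I_n, (l < h)%N ->
    exists c, eki_cov H Sigma y V0 i *m A *m u l = c *: u l.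
  move=> l lh; rewrite -mulmxA hAu //.
  have [c hc] := @cov_invariant _ _ _ _ H Sigma y V0 W delta hS hW hd i l.
  rewrite hc -/G0; case: (ltnP l r) => lr.
    have dn0 : delta 0%N l != 0 by apply: lt0r_neq0; exact: hpos.
    exists (c * delta 0%N l); rewrite -scalerA; congr (_ *: _).
    by rewrite /u /eki_u lr scalerA mulfV // scale1r mulmxA.
  have -> : G0 *m (H^T *m col l W) = 0.
    apply: emp_cov_zero.
    have -> : (H^T *m col l W)^T *m emp_cov (eki_iter H Sigma y V0 0) *m (H^T *m col l W)
        = (col l W)^T *m (H *m G0 *m H^T *m col l W).
      by rewrite trmx_mul trmxK !mulmxA.
    by rewrite hd hzero ?lr // scale0r mulmx0 mxE.
  by exists 0; rewrite scaler0 scale0r.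
pose p1 := fun l : 'I_n => (0 <= l < r)%N.
pose p2 := fun l : 'I_n => (r <= l < h)%N.
have PE : P = (\sum_(l | p1 l) u l *m (u l)^T) *m A by rewrite /P /eki_proj /A !mulmxA.
have QE : Q = (\sum_(l | p2 l) u l *m (u l)^T) *m A by rewrite /Q /eki_proj /A !mulmxA.
have h1 : forall l, p1 l -> (l < h)%N.
  by move=> l /andP[_ lr]; exact: leq_trans lr hrh.
have h2 : forall l, p2 l -> (l < h)%N by move=> l /andP[].
have mulPQ : forall p q : pred 'I_n, (forall l, p l -> (l < h)%N) ->
    (forall l, q l -> (l < h)%N) ->
    (\sum_(l | p l) u l *m (u l)^T) *m A *m ((\sum_(l | q l) u l *m (u l)^T) *m A)
    = (\sum_(l | p l && q l) u l *m (u l)^T) *m A.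
  by move=> p q hp hq; apply: projs_mul => k l pk ql; apply: hortho; auto.
have hPP : P *m P = P.
  by rewrite PE mulPQ //; congr (_ *m _); apply: eq_bigl => l; rewrite andbb.
have hQQ : Q *m Q = Q.
  by rewrite QE mulPQ //; congr (_ *m _); apply: eq_bigl => l; rewrite andbb.
have e12 : forall l, p1 l && p2 l = false.
  move=> l; rewrite /p1 /p2; apply/negbTE/negP => /andP[/andP[_ a] /andP[b _]].
  by move: (leq_trans a b); rewrite ltnn.
have hPQ : P *m Q = 0.
  rewrite PE QE mulPQ // big_pred0 ?mul0mx // => l; exact: e12.
have hQP : Q *m P = 0.
  rewrite PE QE mulPQ // big_pred0 ?mul0mx // => l; rewrite andbC; exact: e12.
have GA : eki_cov H Sigma y V0 i *m H^T *m invmx Sigma *m H = eki_cov H Sigma y V0 i *m A.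
  by rewrite /A !mulmxA.
have comm : forall (p : pred 'I_n), (forall l, p l -> (l < h)%N) ->
    M *m ((\sum_(l | p l) u l *m (u l)^T) *m A) = (\sum_(l | p l) u l *m (u l)^T) *m A *m M.
  move=> p hp; rewrite /M /eki_M GA; apply: invmx_comm.
  rewrite mulmxDl mulmxDr mul1mx mulmx1; congr (_ + _).
  apply: proj_comm => //; first exact: emp_cov_sym.
  by move=> l pl; apply: hGAu; exact: hp.
have hMP' : M *m P = P *m M by rewrite PE; exact: comm.
have hMQ : M *m Q = Q *m M by rewrite QE; exact: comm.
have [hMN hNN hQN hPN hsum] := @N_alg _ _ _ _ _ hPP hQQ hPQ hQP hMP' hMQ.
by rewrite /N; split; [split|split|split|].
Qed.
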